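(* Let $p(z,w)=(z-w)^2$. For every $n\ge 0$ and every $k=0,1,\dots,n$, \[ A^n_{n,k}=-\frac{(n+2)(n+3)}{12}\,(k+1)(k+2)(k-n-1). \]
   Context: For a homogeneous polynomial $p(z,w)$ and $n\ge 0$, let $A^n=(a_{i,j})_{i,j=0}^n$ be the $(n+1)\times(n+1)$ matrix with $a_{i,j}=\langle p w^{i-j},p z^{i-j}\rangle$ for $i\ge j$ and $a_{i,j}=\overline{\langle p w^{j-i},p z^{j-i}\rangle}$ for $i<j$, the inner product being that of the Hardy space $H^2(\mathbb D^2)$ (in which the monomials $z^aw^b$ are orthonormal). Let $A^n_{i,j}$ denote the $(i,j)$ cofactor of $A^n$, i.e. $(-1)^{i+j}$ times the determinant of the matrix obtained from $A^n$ by deleting row $i$ and column $j$ (rows and columns indexed $0,\dots,n$; for $n=0$, $A^0_{0,0}=1$). For $p=(z-w)^2$, $A^n$ is the symmetric pentadiagonal Toeplitz matrix with diagonal entries $6$, first off-diagonal entries $-4$, second off-diagonal entries $1$, and all other entries $0$. *)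

(* Defs.v *)
From HB Require Import structures.
From mathcomp Require Import all_boot all_order all_algebra all_field.
From mathcomp Require Import mpoly.
Set Implicit Arguments. Unset Strict Implicit. Unset Printing Implicit Defensive.
Import Order.TTheory GRing.Theory Num.Theory.
Local Open Scope ring_scope.

Notation cpoly2 := {mpoly algC[2]}.

Definition zvar : cpoly2 := 'X_(0 : 'I_2).
Definition wvar : cpoly2 := 'X_(1 : 'I_2).

(* Hardy space H^2(D^2) inner product on polynomials: monomials orthonormal,
   linear in the first argument, conjugate-linear in the second. *)
Definition hardy_ip (f g : cpoly2) : algC :=
  \sum_(m <- msupp f) f@_m * (g@_m)^*.

Definition Amat (p : cpoly2) (n : nat) : 'M[algC]_(n.+1) :=
  \matrix_(i < n.+1, j < n.+1)
    if (j <= i)%N then hardy_ip (p * wvar ^+ (i - j)) (p * zvar ^+ (i - j))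
    else (hardy_ip (p * wvar ^+ (j - i)) (p * zvar ^+ (j - i)))^*.

Definition psq : cpoly2 := (zvar - wvar) ^+ 2.

(* Main.v *)
Require Import Defs.
From HB Require Import structures.
From mathcomp Require Import all_boot all_order all_algebra all_field.
From mathcomp Require Import mpoly.
From mathcomp Require Import ring zify.
Import GRing.Theory Num.Theory.
Local Open Scope ring_scope.

Definition mono (a b : nat) : 'X_{1..2} :=
  [multinom (if (i : nat) == 0%N then a else b) | i < 2].

Lemma XX a b : zvar ^+ a * wvar ^+ b = 'X_[mono a b].
Proof.
rewrite /zvar /wvar !mpolyXn -mpolyXD; congr mpolyX; apply/mnmP => i.
rewrite mnmDE !mulmnE !mnm1E mnmE.
by case: i => [[|[|]]] //= _; rewrite ?mul1n ?mul0n ?addn0.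
Qed.

Lemma monoE a b c d : (mono a b == mono c d) = (a == c) && (b == d).
Proof.
apply/eqP/andP => [/mnmP h|[/eqP -> /eqP ->]] //.
have := h (0 : 'I_2); have := h (1 : 'I_2); rewrite !mnmE /= => -> -> //.
Qed.

Lemma hardy_ip_seq f g s : uniq s -> {subset msupp f <= s} ->
  hardy_ip f g = \sum_(m <- s) f@_m * (g@_m)^*.
Proof.
move=> us sub; rewrite /hardy_ip [RHS](bigID (mem (msupp f))) /=.
rewrite [X in _ = _ + X]big1 ?addr0; last first.
  move=> m hm; have /eqP -> : f@_m == 0 by rewrite mcoeff_eq0.
  exact: mul0r.
symmetry; rewrite -big_filter; apply: perm_big; apply: uniq_perm.
- exact: filter_uniq.
- exact: msupp_uniq.
move=> m; rewrite mem_filter; apply/andP/idP => [[]//|h]; split => //; exact: sub.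
Qed.

Definition fd (d : nat) : algC :=
  if d == 0%N then 6 else if d == 1%N then -4 else if d == 2%N then 1 else 0.

Lemma pw d : psq * wvar ^+ d =
  'X_[mono 2 d] - 'X_[mono 1 d.+1] *+ 2 + 'X_[mono 0 d.+2].
Proof. rewrite -!XX /psq !expr0 !exprS; ring. Qed.

Lemma pz d : psq * zvar ^+ d =
  'X_[mono d.+2 0] - 'X_[mono d.+1 1] *+ 2 + 'X_[mono d 2].
Proof. rewrite -!XX /psq !expr0 !exprS; ring. Qed.

Lemma hip d : hardy_ip (psq * wvar ^+ d) (psq * zvar ^+ d) = fd d.
Proof.
rewrite pw pz (@hardy_ip_seq _ _ [:: mono 2 d; mono 1 d.+1; mono 0 d.+2]); first last.
  move=> m; rewrite mcoeff_msupp !inE; apply: contraR.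
  rewrite !negb_or => /and3P[h1 h2 h3].
  rewrite !mcoeffD !mcoeffN !mcoeffMn !mcoeffX.
  rewrite eq_sym in h1; rewrite eq_sym in h2; rewrite eq_sym in h3.
  by rewrite (negbTE h1) (negbTE h2) (negbTE h3) /=; apply/eqP; ring.
  by rewrite /= !in_cons !monoE.
rewrite !big_cons big_nil !mcoeffD !mcoeffN !mcoeffMn !mcoeffX !monoE !eqxx.
case: d => [|[|[|d]]] /=; rewrite /fd /=;
  rewrite ?(rmorphD, rmorphB, rmorphN, rmorphMn, rmorph1, rmorph0); ring.
Qed.

Definition ent (i j : nat) : algC := fd ((i - j) + (j - i))%N.

Lemma entS a b : ent a.+1 b.+1 = ent a b.
Proof. by rewrite /ent !subSS. Qed.
Lemma ent0 a : ent a a = 6.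
Proof. by rewrite /ent subnn. Qed.
Lemma ent1 a : ent a a.+1 = -4.
Proof. by rewrite /ent (_ : (a - a.+1 + (a.+1 - a) = 1)%N) //; lia. Qed.
Lemma ent1' a : ent a.+1 a = -4.
Proof. by rewrite /ent (_ : (a.+1 - a + (a - a.+1) = 1)%N) //; lia. Qed.
Lemma ent2 a : ent a a.+2 = 1.
Proof. by rewrite /ent (_ : (a - a.+2 + (a.+2 - a) = 2)%N) //; lia. Qed.
Lemma ent2' a : ent a.+2 a = 1.
Proof. by rewrite /ent (_ : (a.+2 - a + (a - a.+2) = 2)%N) //; lia. Qed.
Lemma entfar a b : (3 <= (a - b) + (b - a))%N -> ent a b = 0.
Proof. by rewrite /ent; case: ((a - b) + (b - a))%N => [|[|[|d]]]. Qed.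

Definition P n (x : algC) := - (((n + 2)%:R * (n + 3)%:R) / 12%:R)
    * (x + 1) * (x + 2) * (x - (n + 1)%:R).
Definition Dn n : algC := (n+2)%:R * (n+3)%:R * (n+3)%:R * (n+4)%:R / 12%:R.

Lemma window n i : (i <= n)%N ->
  \sum_(0 <= m < n.+4.+1) ent i.+2 m * P n (m%:R - 2) = 0.
Proof.
move=> hi.
rewrite (@big_cat_nat _ _ _ i) //; last lia.
rewrite (@big_cat_nat _ _ _ i.+4.+1 i) //; last lia.
rewrite big1_seq; last first.
  move=> m /andP[_]; rewrite mem_index_iota => hm.
  by rewrite entfar ?mul0r //; lia.
rewrite /=; rewrite [X in _ + (_ + X)]big1_seq; last first.
  move=> m /andP[_]; rewrite mem_index_iota => hm.
  by rewrite entfar ?mul0r //; lia.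
rewrite add0r addr0.
do 5 (rewrite big_ltn; last lia).
rewrite big_geq // addr0.
rewrite entS entS ent0 ent2' ent1' !entS ent1 ent2.
rewrite /P !natrD; ring.
Qed.

Lemma shift2 (F : nat -> algC) N :
  \sum_(2 <= m < N.+2) F m = \sum_(0 <= j < N) F j.+2.
Proof. by rewrite big_add1 big_add1 /=. Qed.

Lemma rowsum n i : (i <= n)%N ->
  \sum_(j < n.+1) ent i j * P n j%:R = if i == n then Dn n else 0.
Proof.
move=> hi; have W := @window n i hi.
rewrite (@big_cat_nat _ _ _ 2) //= in W.
rewrite (shift2 (fun m => ent i.+2 m * P n (m%:R - 2)) n.+3) in W.
have E : \sum_(0 <= i0 < 2) ent i.+2 i0 * P n (i0%:R - 2) = 0.
  rewrite big_ltn // big_ltn // big_geq //.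
  by rewrite /P; ring.
rewrite E add0r in W.
rewrite (eq_bigr (fun j => ent i j * P n j%:R)) in W; last first.
  by move=> j _; rewrite !entS -addn2 natrD addrK.
rewrite big_nat_recr // big_nat_recr //= big_mkord in W.
rewrite (_ : P n n.+1%:R = 0) ?mulr0 ?addr0 in W; last by rewrite /P -addn1; ring.
move/eqP: W; rewrite addr_eq0 => /eqP ->.
case: eqP => [->|ne].
  by rewrite ent2 mul1r /P /Dn; ring.
rewrite entfar ?mul0r ?oppr0 //; lia.
Qed.

Lemma fd_conj d : (fd d)^* = fd d.
Proof.
rewrite /fd; case: ifP => _; first by rewrite rmorph_nat.
case: ifP => _; first by rewrite rmorphN rmorph_nat.
case: ifP => _; first by rewrite rmorph1.
by rewrite rmorph0.
Qed.

Lemma Aent n (i j : 'I_n.+1) : Amat psq n i j = ent i j.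
Proof.
rewrite mxE /ent; case: leqP => h; rewrite hip ?fd_conj; congr fd; lia.
Qed.

Lemma Dn_neq0 n : Dn n != 0.
Proof.
rewrite /Dn !mulf_neq0 ?invr_eq0 ?pnatr_eq0 ?addn_eq0 ?andbF //.
Qed.

Lemma main n : \det (Amat psq n) = Dn n /\
  forall k : 'I_n.+1, cofactor (Amat psq n) ord_max k = P n (k%:R).
Proof.
elim: n => [|n [IHd IHc]].
  have Hc : forall k : 'I_1, cofactor (Amat psq 0) ord_max k = P 0 k%:R.
    move=> k; rewrite !ord1 /cofactor det_mx00 /P /=; by field.
  split => //.
  rewrite (expand_det_row _ ord_max) big_ord1 Aent Hc ent0 /P /Dn /=; by field.
set A := Amat psq n.+1.
set c := fun j => cofactor A ord_max j.
set v := fun j : 'I_n.+2 => P n.+1 j%:R.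
have Hcm : c ord_max = Dn n.
  rewrite /c /cofactor /= -IHd.
  have AE : forall i j, A i j = ent i j by move=> i j; exact: Aent.
  have -> : row' ord_max (col' ord_max A) = Amat psq n.
    by apply/matrixP => i j; rewrite [LHS]mxE [LHS]mxE AE Aent !lift_max.
  by rewrite addnn -mul2n exprM sqrrN !expr1n mul1r.
have Hvm : v ord_max = Dn n.
  by rewrite /v /P /Dn /=; ring.
have Hc0 : forall i : 'I_n.+1,
    \sum_(j < n.+2) ent i j * c j = 0.
  move=> i.
  have := congr1 (fun M : 'M[algC]_n.+2 => M (widen_ord (leqnSn n.+1) i) ord_max) (mul_mx_adj A).
  rewrite !mxE /=.
  have -> : (widen_ord (leqnSn n.+1) i == ord_max) = false.
    by apply/negbTE; rewrite -val_eqE /= neq_ltn ltn_ord.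
  rewrite mulr0n => E; rewrite -[in RHS]E.
  by apply: eq_bigr => j _; rewrite /A Aent /c mxE.
have Hv0 : forall i : 'I_n.+1,
    \sum_(j < n.+2) ent i j * v j = 0.
  move=> i; rewrite /v.
  have := @rowsum n.+1 i (leqW (ltnSE (ltn_ord i))).
  rewrite (_ : (i == n.+1 :> nat) = false) => [E|]; last by apply/negbTE; rewrite neq_ltn ltn_ord.
  by rewrite -[in RHS]E.
set y : 'cV_(n.+1) := \col_j (c (widen_ord (leqnSn _) j) - v (widen_ord (leqnSn _) j)).
have By : Amat psq n *m y = 0.
  apply/matrixP => i k; rewrite !mxE.
  have := Hc0 i; rewrite big_ord_recr Hcm => Ec.
  have := Hv0 i; rewrite big_ord_recr Hvm => Ev.
  have : \sum_(j < n.+1) ent i (widen_ord (leqnSn n.+1) j) * c (widen_ord (leqnSn n.+1) j)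
       - \sum_(j < n.+1) ent i (widen_ord (leqnSn n.+1) j) * v (widen_ord (leqnSn n.+1) j) = 0.
    by move/eqP: Ec; rewrite addr_eq0 => /eqP ->; move/eqP: Ev; rewrite addr_eq0 => /eqP ->; rewrite subrr.
  rewrite -sumrB => E; rewrite -[in RHS]E; apply: eq_bigr => j _; by rewrite Aent mxE mulrBr.
have Bu : Amat psq n \in unitmx by rewrite unitmxE unitfE IHd Dn_neq0.
have y0 : y = 0 by rewrite -(mulKmx Bu y) By mulmx0.
have cv : forall j, c j = v j.
  move=> j; have [hj|hj] := ltnP j n.+1.
    have := congr1 (fun M : 'cV[algC]_n.+1 => M (Ordinal hj) 0) y0; rewrite !mxE => /eqP.
    rewrite subr_eq0 => /eqP.
    by have -> : widen_ord (leqnSn n.+1) (Ordinal hj) = j by apply: val_inj.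
  have -> : j = ord_max by apply: val_inj => /=; apply/eqP; rewrite eqn_leq hj -ltnS ltn_ord.
  by rewrite Hcm Hvm.
split; last by move=> k; rewrite -/(c k) cv.
rewrite (expand_det_row _ ord_max).
have := @rowsum n.+1 n.+1 (leqnn _); rewrite eqxx => <-.
by apply: eq_bigr => j _; rewrite Aent -/(c j) cv.
Qed.

Theorem lemma3p4 (n k : nat) (hk : (k <= n)%N) :
  cofactor (Amat psq n) ord_max (inord k) =
  - (((n + 2)%:R * (n + 3)%:R) / 12%:R)
    * (k + 1)%:R * (k + 2)%:R * ((k%:R : algC) - (n + 1)%:R).
Proof.
have [_ ->] := main n.
rewrite inordK ?ltnS // /P; ring.
Qed.
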